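(* Let $m$ be odd and let $Q_{4m}=\langle a,b\mid a^{2m}=e,\ a^m=b^2,\ b^{-1}ab=a^{-1}\rangle$ be the dicyclic group of order $4m$; set $n=2m$. Then there is no inverse-closed subset $S\subseteq Q_{4m}\setminus\{e\}$ such that $\mathrm{Cay}(Q_{4m},S)$ is a non-trivial bipartite distance-regular graph with diameter $3$, i.e., a distance-regular graph with intersection array $\{k,k-1,k-\mu;1,\mu,k\}$ with $k<n-1$.
   Context: For a finite group $G$ with identity $e$ and a subset $S\subseteq G\setminus\{e\}$ with $S=S^{-1}$, the Cayley graph $\mathrm{Cay}(G,S)$ has vertex set $G$, two vertices $a,b$ being adjacent iff $ab^{-1}\in S$. A connected graph of diameter $d$ is distance-regular with intersection array $\{b_0,\dots,b_{d-1};c_1,\dots,c_d\}$ if for all vertices $x,y$ at distance $i$, the number of neighbours of $x$ at distance $i+1$ (resp. $i-1$) from $y$ is $b_i$ (resp. $c_i$). *)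

(* Defs.v *)
From mathcomp Require Import all_boot all_order all_fingroup.
Set Implicit Arguments. Unset Strict Implicit. Unset Printing Implicit Defensive.
Import GroupScope.
Local Open Scope group_scope.

Definition cay (gT : finGroupType) (G S : {set gT}) : rel gT :=
  fun x y => [&& x \in G, y \in G & x * y^-1 \in S].

Fixpoint nstep (T : finType) (e : rel T) (n : nat) (x y : T) : bool :=
  match n with
  | 0 => x == y
  | n'.+1 => [exists z, e x z && nstep e n' z y]
  end.

Definition isdist (T : finType) (e : rel T) (i : nat) (x y : T) : bool :=
  nstep e i x y && [forall j : 'I_i, ~~ nstep e j x y].

(* The graph (V, e) is connected, has diameter d, and is distance-regular
   with intersection array {b_0,...,b_{d-1}; c_1,...,c_d}
   (b = [:: b_0; ...; b_{d-1}], c = [:: c_1; ...; c_d]). *)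
Definition distance_regular (T : finType) (V : {set T}) (e : rel T)
    (d : nat) (b c : seq nat) : Prop :=
  (size b = d /\ size c = d /\
      (forall x y, x \in V -> y \in V -> exists2 i, i <= d & isdist e i x y) /\
      (exists x y, [/\ x \in V, y \in V & isdist e d x y]) /\
      (forall i x y, x \in V -> y \in V -> isdist e i x y -> i < d ->
         #|[set z in V | e x z && isdist e i.+1 z y]| = nth 0 b i) /\
    (forall i x y, x \in V -> y \in V -> isdist e i x y -> 1 <= i <= d ->
         #|[set z in V | e x z && isdist e i.-1 z y]| = nth 0 c i.-1))%N.

(* Main.v *)
Require Import Defs.
From mathcomp Require Import all_boot all_order all_fingroup.
Set Implicit Arguments. Unset Strict Implicit. Unset Printing Implicit Defensive.
Import GroupScope.
From mathcomp Require Import cyclic.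

Lemma isdist_uniq (T : finType) (e : rel T) i j x y :
  isdist e i x y -> isdist e j x y -> i = j.
Proof.
move=> /andP[Hi /forallP Fi] /andP[Hj /forallP Fj].
case: (ltngtP i j) => // H.
  by move: (Fj (Ordinal H)); rewrite Hi.
by move: (Fi (Ordinal H)); rewrite Hj.
Qed.

Lemma isdist0 (T : finType) (e : rel T) x : isdist e 0 x x.
Proof. by rewrite /isdist /= eqxx; apply/forallP => -[]. Qed.

Lemma isdist1 (T : finType) (e : rel T) z x :
  (forall y, e y y = false) -> isdist e 1 z x = e z x.
Proof.
move=> irr; rewrite /isdist /=.
apply/idP/idP.
  by case/andP => /existsP[w /andP[H /eqP <-]].
move=> H; apply/andP; split; first by apply/existsP; exists x; rewrite H eqxx.
apply/forallP => -[[|//] ?] /=; apply/negP => /eqP E.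
by move: H; rewrite E irr.
Qed.

Lemma nbr_card (T : finType) (V : {set T}) (e : rel T)
  (esymm : forall x y, e x y = e y x)
  (irr : forall y, e y y = false) x :
  #|[set w in V | e x w && isdist e 1 w x]| = #|[set w in V | e x w]|.
Proof.
apply: eq_card => w; rewrite !inE isdist1 //.
by rewrite esymm andbb.
Qed.
Lemma graph_key (T : finType) (V : {set T}) (e : rel T) k mu
  (esymm : forall x y, e x y = e y x)
  (irr : forall y, e y y = false)
  (eV : forall x y, e x y -> (x \in V) && (y \in V))
  (D : distance_regular V e 3 [:: k; k - 1; k - mu]%N [:: 1; mu; k]%N) :
  forall i x y z, x \in V -> y \in V -> isdist e i x y -> e x z ->
  exists2 j, isdist e j z y & odd j = ~~ odd i.
Proof.
case: D => _ [_ [Dconn [_ [Db Dc]]]] i x y z xV yV Hi exz.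
have i3 : (i <= 3)%N.
  have [j j3 Hj] := Dconn x y xV yV.
  by rewrite (isdist_uniq Hi Hj).
set N := [set w in V | e x w].
set B := [set w in V | e x w && isdist e i.+1 w y].
set C := [set w in V | e x w && isdist e i.-1 w y].
have cN : #|N| = k.
  rewrite -[k]/(nth 0 [:: k; k - 1; k - mu] 0) -(Db 0 x x xV xV (isdist0 e x) isT).
  by rewrite nbr_card.

have sBC : B :|: C \subset N.
  by apply/subsetP => w; rewrite !inE => /orP[]/andP[-> /andP[-> _]].
have lBC : (#|N| <= #|B :|: C|)%N.
  have cB : (i < 3)%N -> #|B| = nth 0 [:: k; k - 1; k - mu]%N i.
    by move=> h; apply: (Db i x y xV yV Hi h).
  have cC : (1 <= i <= 3)%N -> #|C| = nth 0 [:: 1; mu; k]%N i.-1.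
    by move=> h; apply: (Dc i x y xV yV Hi h).
  rewrite cN cardsU.
  have -> : B :&: C = set0.
    apply/setP => w; rewrite !inE.
    apply/negP => /andP[/andP[_ /andP[_ h1]] /andP[_ /andP[_ h2]]].
    have := isdist_uniq h1 h2; case: (i) => //= n; by move=> /eqP; rewrite -addn2 -{2}[n]addn0 eqn_add2l.
  rewrite cards0 subn0.
  move: i3 cB cC; case: (i) => [|[|[|[|//]]]] /= _ cB cC.
  - by rewrite cB //; apply: leq_addr.
  - rewrite cB // cC //; by rewrite addnC -leq_subLR.
  - rewrite cB // cC //; by rewrite addnC -leq_subLR.
  - by rewrite cC //; apply: leq_addl.
have zN : z \in N by rewrite inE exz; case/andP: (eV _ _ exz) => _ ->.
have /eqP E : B :|: C == N by rewrite eqEcard sBC lBC.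
move: zN; rewrite -E; rewrite !inE => /orP[] /andP[_ /andP[_ h]].
  by exists i.+1 => //=; rewrite negbK.
exists i.-1 => //; move: Hi h; case: (i) => [|n] Hi h /=; last by rewrite negbK.
by move: h Hi exz; rewrite /isdist /= => /andP[/eqP -> _] /andP[/eqP -> _]; rewrite irr.
Qed.

Definition eps (gT : finGroupType) (G S : {set gT}) (x : gT) :=
  [exists j : 'I_4, isdist (cay G S) j x 1 && odd j].

Lemma S_inv (gT : finGroupType) (S : {set gT}) s :
  [set x^-1 | x in S] = S -> s \in S -> s^-1 \in S.
Proof. by move=> H sS; rewrite -H; apply: imset_f. Qed.

Lemma cay_sym (gT : finGroupType) (G S : {set gT}) :
  [set x^-1 | x in S] = S -> forall x y, cay G S x y = cay G S y x.
Proof.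
move=> H x y; rewrite /cay.
suff K : forall x y, x * y^-1 \in S -> y * x^-1 \in S.
  by apply/idP/idP => /and3P[-> -> /K ->].
by move=> u v /(S_inv H); rewrite invMg invgK.
Qed.

Lemma cay_irr (gT : finGroupType) (G S : {set gT}) :
  S \subset G :\ 1 -> forall y, cay G S y y = false.
Proof.
move=> HS y; rewrite /cay mulgV; apply/negP => /and3P[_ _ /(subsetP HS)].
by rewrite !inE eqxx.
Qed.

Lemma cay_V (gT : finGroupType) (G S : {set gT}) x y :
  cay G S x y -> (x \in G) && (y \in G).
Proof. by case/and3P => -> ->. Qed.


Lemma eps_E (gT : finGroupType) (G S : {set gT}) k mu
  (D : distance_regular G (cay G S) 3 [:: k; k - 1; k - mu]%N [:: 1; mu; k]%N)
  x j : x \in G -> (1 : gT) \in G -> isdist (cay G S) j x 1 -> eps G S x = odd j.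
Proof.
case: (D) => _ [_ [Dconn _]] xG oG Hj.
have [i i3 Hi] := Dconn x 1 xG oG.
have E := isdist_uniq Hi Hj; subst j.
apply/existsP/idP.
  by case=> l /andP[Hl ol]; rewrite -(isdist_uniq Hl Hi).
by move=> oi; exists (Ordinal (i3 : (i < 4)%N)); rewrite Hi.
Qed.

Lemma eps_adj (gT : finGroupType) (G : {group gT}) (S : {set gT}) k mu
  (HS : S \subset G :\ 1) (Hinv : [set x^-1 | x in S] = S)
  (D : distance_regular G (cay G S) 3 [:: k; k - 1; k - mu]%N [:: 1; mu; k]%N)
  x z : cay G S x z -> eps G S z = ~~ eps G S x.
Proof.
move=> exz; case/andP: (cay_V exz) => xG zG.
have [i _ Hi] := (D.2.2.1) x 1 xG (group1 G).
have [j Hj oj] := graph_key (@cay_sym _ G S Hinv) (@cay_irr _ G S HS) (@cay_V _ G S) D xG (group1 G) Hi exz.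
by rewrite (eps_E D zG (group1 G) Hj) (eps_E D xG (group1 G) Hi).
Qed.

Lemma eps_walk (gT : finGroupType) (G : {group gT}) (S : {set gT}) k mu
  (HS : S \subset G :\ 1) (Hinv : [set x^-1 | x in S] = S)
  (D : distance_regular G (cay G S) 3 [:: k; k - 1; k - mu]%N [:: 1; mu; k]%N)
  j : forall x y, nstep (cay G S) j x y -> x \in G -> y \in G ->
  forall h, h \in G -> eps G S (x * y^-1 * h) = odd j (+) eps G S h.
Proof.
elim: j => [|j IH] x y /=.
  by move=> /eqP -> _ _ h _; rewrite mulgV mul1g.
case/existsP => z /andP[exz Hz] xG yG h hG.
case/andP: (cay_V exz) => _ zG.
have wG : z * y^-1 * h \in G by rewrite !groupM ?groupV.
have -> : x * y^-1 * h = (x * z^-1) * (z * y^-1 * h).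
  by rewrite !mulgA mulgKV.
have e1 : cay G S ((x * z^-1) * (z * y^-1 * h)) (z * y^-1 * h).
  have sG : x * z^-1 \in G by rewrite groupM ?groupV.
  by rewrite /cay mulgK wG (groupM sG wG); case/and3P: exz => _ _ ->.
have := IH z y Hz zG yG h hG; rewrite (eps_adj HS Hinv D e1).
by case: (eps G S (x * z^-1 * (z * y^-1 * h))); case: (odd j); case: (eps G S h).
Qed.

Lemma eps_mul (gT : finGroupType) (G : {group gT}) (S : {set gT}) k mu
  (HS : S \subset G :\ 1) (Hinv : [set x^-1 | x in S] = S)
  (D : distance_regular G (cay G S) 3 [:: k; k - 1; k - mu]%N [:: 1; mu; k]%N)
  g h : g \in G -> h \in G -> eps G S (g * h) = eps G S g (+) eps G S h.
Proof.
move=> gG hG.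
have [d _ Hd] := (D.2.2.1) g 1 gG (group1 G).
have W := eps_walk HS Hinv D (andP Hd).1 gG (group1 G).
have e1 : eps G S 1 = false by rewrite (eps_E D (group1 G) (group1 G) (isdist0 _ _)).
have := W 1 (group1 G); rewrite invg1 !mulg1 e1 addbF => ->.
by have := W h hG; rewrite invg1 mulg1.
Qed.


Theorem proposition5p3 (gT : finGroupType) (G : {group gT}) (a b : gT) (m : nat) :
  odd m ->
  G :=: <<[set a; b]>> ->
  a ^+ (2 * m) = 1 ->
  a ^+ m = b ^+ 2 ->
  a ^ b = a^-1 ->
  #|G| = (4 * m)%N ->
  forall S : {set gT},
    S \subset G :\ 1 ->
    [set x^-1 | x in S] = S ->
    ~ (exists k mu : nat,
         (k < 2 * m - 1)%N /\
         distance_regular G (cay G S) 3 [:: k; k - 1; k - mu]%N [:: 1; mu; k]%N).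
Proof.
move=> Hodd HG Ha Hab Hconj Hcard S HS Hinv [k [mu [Hk D]]].
have aG : a \in G by rewrite HG mem_gen // !inE eqxx.
have bG : b \in G by rewrite HG mem_gen // !inE eqxx orbT.
have oG := group1 G.
have SG : forall s, s \in S -> s \in G by move=> s /(subsetP HS); rewrite !inE => /andP[].
have e1 : eps G S 1 = false by rewrite (eps_E D oG oG (isdist0 _ _)).
have epsS : forall s, s \in S -> eps G S s.
  move=> s sS; have sG := SG s sS.
  have c1 : cay G S s 1 by rewrite /cay sG oG invg1 mulg1.
  by have := eps_adj HS Hinv D c1; rewrite e1 => /esym/negbFE.
have epsX : forall x n, x \in G -> eps G S (x ^+ n) = odd n && eps G S x.
  move=> x n xG; elim: n => [|n IH]; first by rewrite expg0 e1.
  rewrite expgS (eps_mul HS Hinv D xG (groupX n xG)) IH /=.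
  by case: (odd n); case: (eps G S x).
have ea : eps G S a = false.
  have := congr1 (eps G S) Hab; rewrite !epsX // Hodd /=.
  by case: (eps G S a).
have epsA : forall y, y \in <[a]> -> eps G S y = false.
  by move=> y /cycleP[n ->]; rewrite epsX // ea andbF.
have cA : a ^+ m \in <[a]> by apply: mem_cycle.
have bb : b * b = a ^+ m by rewrite Hab expgS expg1.
have conjA : forall y, y \in <[a]> -> y ^ b = y^-1.
  by move=> y /cycleP[n ->]; rewrite conjXg Hconj expVgn.
have yb : forall y, y \in <[a]> -> y * b = b * y^-1.
  by move=> y yA; rewrite conjgC conjA.
have by_ : forall y, y \in <[a]> -> b * y = y^-1 * b.
  by move=> y yA; rewrite yb ?groupV // invgK.
pose P x := x \in <[a]> \/ exists2 y, y \in <[a]> & x = y * b.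
have Pstep : forall x t, P x -> t \in [set a; b] -> P (x * t).
  move=> x t Px; rewrite !inE => /orP[]/eqP ->.
    case: Px => [xA | [y yA ->]]; first by left; rewrite groupM // cycle_id.
    right; exists (y * a^-1); first by rewrite groupM ?groupV // cycle_id.
    by rewrite -!mulgA by_ // cycle_id.
  case: Px => [xA | [y yA ->]]; first by right; exists x.
  by left; rewrite -mulgA bb groupM.
have NF : forall g, g \in G -> P g.
  move=> g; rewrite HG => /gen_prodgP[n [c Hc ->]].
  elim: n c Hc => [|n IH] c Hc; first by rewrite big_ord0; left; apply: group1.
  rewrite big_ord_recr /=; apply: Pstep (Hc _).
  exact: (IH (fun i => c (widen_ord (leqnSn n) i)) (fun i => Hc _)).
have sq : forall s, s \in S -> s * s = a ^+ m.
  move=> s sS; case: (NF s (SG s sS)) => [sA | [y yA ->]].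
    by move: (epsS s sS); rewrite epsA.
  by rewrite -mulgA (mulgA b) by_ // -!mulgA mulKVg.
have c1 : a ^+ m != 1.
  apply/eqP => am1.
  have sub : G \subset <[a]> :|: <[a]> :* b.
    apply/subsetP => g gG; rewrite inE; case: (NF g gG) => [-> // | [y yA ->]].
    by rewrite mem_rcoset mulgK yA orbT.
  have ord : (#[a] <= m)%N.
    apply: dvdn_leq; first by case: (m) Hodd.
    by rewrite order_dvdn am1.
  have := leq_trans (subset_leq_card sub) (leq_card_setU _ _).1.
  rewrite Hcard card_rcoset => H3.
  have : (4 * m <= 2 * m)%N by apply: leq_trans H3 _; rewrite mul2n -addnn leq_add.
  by case: (m) Hodd => // m' _; rewrite leq_pmul2r.
have cG : a ^+ m \in G by rewrite groupX.
have D' := D; case: D' => _ [_ [Dconn [[u [v [uG vG Huv]]] [Db Dc]]]].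
have d2 : isdist (cay G S) 2 (a ^+ m) 1.
  have [d d3 Hd] := Dconn _ _ cG oG.
  have := eps_E D cG oG Hd; rewrite epsA //.
  move: d3 Hd; case: d => [|[|[|[|//]]]] //= _.
  by case/andP => /eqP E _; move: c1; rewrite E eqxx.
have cirr := @cay_irr _ G S HS.
have csym := @cay_sym _ G S Hinv.
have Hset : forall x, x \in [set 1; a ^+ m] ->
    [set z in G | cay G S x z && isdist (cay G S) 1 z 1] =
    [set z in G | cay G S z 1].
  move=> x xx; apply/setP => z; rewrite !inE isdist1 //.
  case zG : (z \in G) => //=; apply/andP/idP => [[] //|cz1]; split=> //.
  have zS : z \in S by move: cz1; rewrite /cay invg1 mulg1 => /and3P[].
  move: xx; rewrite !inE => /orP[]/eqP ->.
    by rewrite csym.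
  by rewrite /cay cG zG -(sq z zS) mulgK.
have kmu : mu = k.
  have := Dc 2 _ _ cG oG d2 isT; rewrite /= Hset ?inE ?eqxx ?orbT // => <-.
  have := Db 0 _ _ oG oG (isdist0 _ _) isT; rewrite /= Hset ?inE ?eqxx // => <-.
move: Huv; rewrite /isdist => /andP[/existsP[z /andP[uz Hz]] /forallP Fuv].
have zG : z \in G by case/andP: (cay_V uz).
have zv : isdist (cay G S) 2 z v.
  have [j j3 Hj] := Dconn _ _ zG vG.
  move: j3 Hj; case: j => [|[|[|[|//]]]] //= _ /andP[Hj Fj].
  - by move: (Fuv (Ordinal (isT : (1 < 3)%N))) => /=; rewrite negb_exists => /forallP/(_ z); rewrite uz; move: Hj => /= ->.
  - by move: (Fuv (Ordinal (isT : (2 < 3)%N))) => /=; rewrite negb_exists => /forallP/(_ z); rewrite uz; move: Hj => /= ->.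
  - by move/forallP: Fj => /(_ (Ordinal (isT : (2 < 3)%N))) /=; rewrite Hz.
have := Db 2 _ _ zG vG zv isT; rewrite /= kmu subnn => /eqP; rewrite cards_eq0 => /eqP E.
have : u \in [set w in G | cay G S z w && isdist (cay G S) 3 w v].
  have N3 : nstep (cay G S) 3 u v.
    by rewrite [nstep _ 3 _ _]/=; apply/existsP; exists z; rewrite uz; exact: Hz.
  by rewrite !inE uG -csym uz /isdist N3; apply/forallP.
by rewrite E inE.
Qed.
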